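(* Let $k\ge0$, let $A,B$ be finite alphabets and $f:B^*\to A^*$ a monoid homomorphism. For $w_1,w_2\in B^*$, if $w_1\equiv_k w_2$ then $f(w_1)\equiv_k f(w_2)$.
   Context: For words $u_1,u_2$ over an alphabet, $u_1\equiv_k u_2$ means that $u_1$ and $u_2$ satisfy exactly the same sentences of $FO^2[<,\mathrm{Inv}]$ of quantifier depth at most $k$ (over that alphabet). $FO^2[<,\mathrm{Inv}]$ is two-variable first-order logic with $<$, unary letter predicates $a(x)$, and binary predicates $a(x,y)$ meaning that $a$ occurs at some position strictly between $x$ and $y$. *)

(* Defs.v *)
From mathcomp Require Import all_boot.
Set Implicit Arguments. Unset Strict Implicit. Unset Printing Implicit Defensive.

Inductive var := VX | VY.

Definition var_eqb (u v : var) : bool :=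
  match u, v with VX, VX | VY, VY => true | _, _ => false end.

Inductive form (A : Type) : Type :=
| FTrue  : form A
| FLet   : A -> var -> form A
| FEq    : var -> var -> form A
| FLt    : var -> var -> form A
| FInv   : A -> var -> var -> form A          (* a(x,y): a occurs strictly between x and y *)
| FNot   : form A -> form A
| FAnd   : form A -> form A -> form A
| FOr    : form A -> form A -> form A
| FEx    : var -> form A -> form A
| FAll   : var -> form A -> form A.

Section Semantics.
Variable A : eqType.

Fixpoint qdepth (phi : form A) : nat :=
  match phi with
  | FNot p => qdepth p
  | FAnd p q | FOr p q => maxn (qdepth p) (qdepth q)
  | FEx _ p | FAll _ p => (qdepth p).+1
  | _ => 0
  end.

Fixpoint free (v : var) (phi : form A) : bool :=
  match phi with
  | FTrue => false
  | FLet _ x => var_eqb v x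
  | FEq x y | FLt x y | FInv _ x y => var_eqb v x || var_eqb v y
  | FNot p => free v p
  | FAnd p q | FOr p q => free v p || free v q
  | FEx x p | FAll x p => ~~ var_eqb v x && free v p
  end.

Definition sentence (phi : form A) : Prop := ~~ free VX phi /\ ~~ free VY phi.

Definition update (nu : var -> nat) (v : var) (i : nat) : var -> nat :=
  fun u => if var_eqb u v then i else nu u.

Fixpoint eval (w : seq A) (nu : var -> nat) (phi : form A) : Prop :=
  match phi with
  | FTrue => True
  | FLet a x => onth w (nu x) = Some a
  | FEq x y => nu x = nu y
  | FLt x y => nu x < nu y
  | FInv a x y => exists z, nu x < z < nu y /\ onth w z = Some a
  | FNot p => ~ eval w nu p
  | FAnd p q => eval w nu p /\ eval w nu q
  | FOr p q => eval w nu p \/ eval w nu q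
  | FEx x p => exists i, i < size w /\ eval w (update nu x i) p
  | FAll x p => forall i, i < size w -> eval w (update nu x i) p
  end.

(* Truth of a sentence (the assignment is irrelevant for sentences). *)
Definition sat (w : seq A) (phi : form A) : Prop := eval w (fun _ => 0) phi.

Definition fo2inv_equiv (k : nat) (u1 u2 : seq A) : Prop :=
  forall phi : form A, sentence phi -> qdepth phi <= k -> (sat u1 phi <-> sat u2 phi).

End Semantics.

Definition monoid_hom (B A : Type) (f : seq B -> seq A) : Prop :=
  f [::] = [::] /\ forall u v, f (u ++ v) = f u ++ f v.

(* Main.v *)
Require Import Defs.
From mathcomp Require Import all_boot zify.
Set Implicit Arguments. Unset Strict Implicit. Unset Printing Implicit Defensive.

Section Trans.
Variables (A : eqType) (B : finType) (g : B -> seq A).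

Definition Fw (w : seq B) : seq A := flatten (map g w).
Definition pos (w : seq B) (j : nat) : nat := size (Fw (take j w)).

Lemma pos0 w : pos w 0 = 0.
Proof. by rewrite /pos take0. Qed.

Lemma posS w b j : pos (b :: w) j.+1 = size (g b) + pos w j.
Proof. by rewrite /pos /Fw /= size_cat. Qed.

Lemma FwS b w : Fw (b :: w) = g b ++ Fw w.
Proof. by []. Qed.

Lemma onth_pos w j o b : onth w j = Some b -> o < size (g b) ->
  onth (Fw w) (pos w j + o) = onth (g b) o.
Proof.
elim: w j => [|c w IH] [|j] //=.
- by move=> [<-] ho; rewrite pos0 add0n FwS onth_cat ho.
- move=> hj ho; rewrite posS FwS onth_cat.
  have -> : (size (g c) + pos w j + o < size (g c)) = false by lia.
  have -> : size (g c) + pos w j + o - size (g c) = pos w j + o by lia.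
  exact: IH.
Qed.

Lemma decomp w i : i < size (Fw w) ->
  exists j o b, [/\ onth w j = Some b, o < size (g b) & i = pos w j + o].
Proof.
elim: w i => [|c w IH] i //=.
rewrite FwS size_cat => hi.
case: (ltnP i (size (g c))) => hc.
- by exists 0, i, c; rewrite pos0.
- have [j [o [b [h1 h2 h3]]]] : exists j o b, [/\ onth w j = Some b, o < size (g b) & i - size (g c) = pos w j + o].
    apply: IH; lia.
  exists j.+1, o, b; split => //; rewrite posS; lia.
Qed.

Lemma pos_lt w j1 o1 j2 b : onth w j1 = Some b -> o1 < size (g b) -> j1 < j2 ->
  pos w j1 + o1 < pos w j2.
Proof.
elim: w j1 j2 => [|c w IH] [|j1] [|j2] //=.
- move=> [<-] ho _; rewrite pos0 posS; lia.
- move=> hj ho hlt; rewrite !posS.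
  have := IH j1 j2 hj ho hlt; lia.
Qed.

Lemma onth_some_lt (T : Type) (s : seq T) j x : onth s j = Some x -> j < size s.
Proof. by move=> h; rewrite -onthTE h. Qed.

Lemma valid_lt w j o b : onth w j = Some b -> o < size (g b) -> pos w j + o < size (Fw w).
Proof.
move=> hj ho; have := pos_lt hj ho (onth_some_lt hj).
by rewrite /pos take_size.
Qed.

Lemma lex w j1 o1 b1 j2 o2 b2 : onth w j1 = Some b1 -> o1 < size (g b1) ->
  onth w j2 = Some b2 -> o2 < size (g b2) ->
  (pos w j1 + o1 < pos w j2 + o2) = (j1 < j2) || ((j1 == j2) && (o1 < o2)).
Proof.
move=> h1 ho1 h2 ho2.
case: (ltngtP j1 j2) => hj /=.
- have := pos_lt h1 ho1 hj; lia.
- have := pos_lt h2 ho2 hj; lia.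
- subst; lia.
Qed.

Lemma lexeq w j1 o1 b1 j2 o2 b2 : onth w j1 = Some b1 -> o1 < size (g b1) ->
  onth w j2 = Some b2 -> o2 < size (g b2) ->
  (pos w j1 + o1 = pos w j2 + o2) <-> (j1 = j2 /\ o1 = o2).
Proof.
move=> h1 ho1 h2 ho2; split; last by case=> -> ->.
move=> e.
have a := lex h1 ho1 h2 ho2; have b := lex h2 ho2 h1 ho1.
rewrite e ltnn in a; rewrite e ltnn in b.
case: (ltngtP j1 j2) a b => //= hj _ _; subst; lia.
Qed.


Definition orF (l : seq (form B)) : form B := foldr (@FOr B) (FNot (FTrue B)) l.
Definition andF (l : seq (form B)) : form B := foldr (@FAnd B) (FTrue B) l.
Definition boolF (c : bool) : form B := if c then FTrue B else FNot (FTrue B).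
Definition setF (P : pred B) (v : var) : form B := orF [seq FLet b v | b <- enum P].
Definition invF (P : pred B) (x y : var) : form B := orF [seq FInv b x y | b <- enum P].
Definition hasA (a : A) (p : pred nat) (b : B) : bool :=
  has (fun o => p o && (onth (g b) o == Some a)) (iota 0 (size (g b))).
Definition M : nat := \max_(b : B) size (g b).

Fixpoint T (phi : form A) (off : var -> nat) : form B :=
  match phi with
  | FTrue => FTrue B
  | FLet a x => setF (fun b => onth (g b) (off x) == Some a) x
  | FEq x y => FAnd (FEq B x y) (boolF (off x == off y))
  | FLt x y => FOr (FLt B x y) (FAnd (FEq B x y) (boolF (off x < off y)))
  | FInv a x y =>
      FOr (FAnd (FLt B x y)
                (FOr (FOr (setF (hasA a (fun o => off x < o)) x)
                          (setF (hasA a (fun o => o < off y)) y))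
                     (invF (hasA a predT) x y)))
          (FAnd (FEq B x y) (setF (hasA a (fun o => off x < o < off y)) x))
  | FNot p => FNot (T p off)
  | FAnd p q => FAnd (T p off) (T q off)
  | FOr p q => FOr (T p off) (T q off)
  | FEx x p => FEx x (orF [seq FAnd (setF (fun b => o < size (g b)) x) (T p (update off x o))
                          | o <- iota 0 M])
  | FAll x p => FAll x (andF [seq FOr (FNot (setF (fun b => o < size (g b)) x))
                                     (T p (update off x o)) | o <- iota 0 M])
  end.

Lemma eval_orF (I : eqType) (w : seq B) nu (h : I -> form B) (s : seq I) :
  eval w nu (orF (map h s)) <-> exists i, i \in s /\ eval w nu (h i).
Proof.
elim: s => [|i s IH] /=; first by split=> // -[i []].
split.
- case=> [H|/IH [j [hj H]]]; first by exists i; rewrite mem_head.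
  by exists j; rewrite inE hj orbT.
- case=> j []; rewrite inE => /orP [/eqP ->|hj] H; first by left.
  by right; apply/IH; exists j.
Qed.

Lemma eval_andF (I : eqType) (w : seq B) nu (h : I -> form B) (s : seq I) :
  eval w nu (andF (map h s)) <-> forall i, i \in s -> eval w nu (h i).
Proof.
elim: s => [|i s IH] /=; first by split.
split.
- case=> H /IH H2 j; rewrite inE => /orP [/eqP ->|hj] //; exact: H2.
- move=> H; split; first by apply: H; rewrite mem_head.
  by apply/IH => j hj; apply: H; rewrite inE hj orbT.
Qed.

Lemma eval_boolF w nu c : eval w nu (boolF c) <-> c.
Proof. by case: c => /=; split. Qed.

Lemma eval_setF w nu P v :
  eval w nu (setF P v) <-> exists b, P b /\ onth w (nu v) = Some b.
Proof.
rewrite /setF eval_orF /=; split.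
- by case=> b []; rewrite mem_enum => ??; exists b.
- by case=> b [??]; exists b; rewrite mem_enum.
Qed.

Lemma eval_invF w nu P x y :
  eval w nu (invF P x y) <-> exists z b, nu x < z < nu y /\ P b /\ onth w z = Some b.
Proof.
rewrite /invF eval_orF /=; split.
- by case=> b []; rewrite mem_enum => ? [z [? ?]]; exists z, b.
- by case=> z [b [? [? ?]]]; exists b; rewrite mem_enum; split=> //; exists z.
Qed.

Lemma hasAP a p b : hasA a p b <-> exists o, p o /\ onth (g b) o = Some a.
Proof.
rewrite /hasA; split.
- by case/hasP=> o _ /andP [? /eqP ?]; exists o.
- case=> o [h1 h2]; apply/hasP; exists o; last by rewrite h1 h2 eqxx.
  by rewrite mem_iota add0n /= (onth_some_lt h2).
Qed.

Lemma size_le_M b : size (g b) <= M.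
Proof. by rewrite /M (bigD1 b) //= leq_maxl. Qed.


Lemma var_eqbb v : var_eqb v v.
Proof. by case: v. Qed.

Lemma upd_same nu x i : update nu x i x = i.
Proof. by rewrite /update var_eqbb. Qed.

Lemma T_correct w phi : forall nu nu' off,
  (forall v, free v phi -> exists b, onth w (nu v) = Some b /\ off v < size (g b)) ->
  (forall v, nu' v = pos w (nu v) + off v) ->
  (eval (Fw w) nu' phi <-> eval w nu (T phi off)).
Proof.
elim: phi => [|a x|x y|x y|a x y|p IH|p IHp q IHq|p IHp q IHq|x p IH|x p IH]
  nu nu' off H Hn /=.
- by [].
- have [bx [hx hox]] := H x ltac:(by rewrite /= var_eqbb).
  rewrite eval_setF Hn (onth_pos hx hox); split.
  + by move=> h; exists bx; rewrite h eqxx.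
  + by case=> b [/eqP hb]; rewrite hx => -[->].
- have [bx [hx hox]] := H x ltac:(by rewrite /= var_eqbb).
  have [by_ [hy hoy]] := H y ltac:(by rewrite /= var_eqbb orbT).
  rewrite !Hn (lexeq hx hox hy hoy) eval_boolF; split.
  + by case=> -> ->; rewrite eqxx.
  + by case=> -> /eqP.
- have [bx [hx hox]] := H x ltac:(by rewrite /= var_eqbb).
  have [by_ [hy hoy]] := H y ltac:(by rewrite /= var_eqbb orbT).
  rewrite !Hn (lex hx hox hy hoy) eval_boolF; split.
  + by case/orP=> [h|/andP [/eqP e h]]; [left|right].
  + by case=> [->|[-> h]] //; rewrite eqxx h orbT.
- have [bx [hx hox]] := H x ltac:(by rewrite /= var_eqbb).
  have [by_ [hy hoy]] := H y ltac:(by rewrite /= var_eqbb orbT).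
  have mk : forall j o b, onth w j = Some b -> onth (g b) o = Some a ->
     (nu x < j) || (nu x == j) && (off x < o) -> (j < nu y) || (j == nu y) && (o < off y) ->
     exists z, nu' x < z < nu' y /\ onth (Fw w) z = Some a.
    move=> j o b hj ho c1 c2; have hs := onth_some_lt ho.
    exists (pos w j + o).
    by rewrite !Hn (lex hx hox hj hs) (lex hj hs hy hoy) c1 c2 (onth_pos hj hs) ho.
  rewrite !eval_setF eval_invF; split.
  + case=> z [/andP [h1 h2] hz].
    have [j [o [b [hj ho ez]]]] := decomp (onth_some_lt hz).
    rewrite ez (onth_pos hj ho) in hz.
    rewrite ez !Hn (lex hx hox hj ho) (lex hj ho hy hoy) in h1 h2.
    case/orP: h1 => [h1|/andP [/eqP e1 h1]]; case/orP: h2 => [h2|/andP [/eqP e2 h2]].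
    * left; split; first exact: ltn_trans h2.
      right; exists j, b; split; first by rewrite h1 h2.
      by split=> //; apply/hasAP; exists o.
    * left; split; first by rewrite -e2.
      left; right; exists b; split; last by rewrite -e2.
      by apply/hasAP; exists o.
    * left; split; first by rewrite e1.
      left; left; exists b; split; last by rewrite e1.
      by apply/hasAP; exists o.
    * right; split; first by rewrite e1 e2.
      exists b; split; last by rewrite e1.
      by apply/hasAP; exists o; rewrite h1 h2.
  + case=> [[hlt [[[b [/hasAP [o [ho1 ho2]] hb]]|[b [/hasAP [o [ho1 ho2]] hb]]]|
               [z [b [/andP [hz1 hz2] [/hasAP [o [_ ho2]] hb]]]]]]|
            [e [b [/hasAP [o [/andP [ho1 ho3] ho2]] hb]]]].
    * apply: (mk (nu x) o b hb ho2); first by rewrite eqxx ho1 orbT.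
      by rewrite hlt.
    * apply: (mk (nu y) o b hb ho2); first by rewrite hlt.
      by rewrite eqxx ho1 orbT.
    * by apply: (mk z o b hb ho2); rewrite ?hz1 ?hz2.
    * apply: (mk (nu x) o b hb ho2); first by rewrite eqxx ho1 orbT.
      by rewrite e eqxx ho3 orbT.
- apply: not_iff_compat; apply: IH => // v hv; exact: H.
- rewrite (IHp nu nu' off) ?(IHq nu nu' off) //.
  + by move=> v hv; apply: H; rewrite /= hv orbT.
  + by move=> v hv; apply: H; rewrite /= hv.
- rewrite (IHp nu nu' off) ?(IHq nu nu' off) //.
  + by move=> v hv; apply: H; rewrite /= hv orbT.
  + by move=> v hv; apply: H; rewrite /= hv.
- have IHx : forall i j o b, onth w j = Some b -> o < size (g b) -> i = pos w j + o ->
    (eval (Fw w) (update nu' x i) p <-> eval w (update nu x j) (T p (update off x o))).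
    move=> i j o b hj ho ->; apply: IH.
    + move=> v hv; rewrite /update; case e: (var_eqb v x); first by exists b.
      by apply: H; rewrite /= e hv.
    + by move=> v; rewrite /update; case: (var_eqb v x).
  split.
  + case=> i [hi hev].
    have [j [o [b [hj ho ei]]]] := decomp hi.
    exists j; split; first exact: onth_some_lt hj.
    apply/eval_orF; exists o; split.
      by rewrite mem_iota add0n /=; exact: leq_trans ho (size_le_M b).
    split; first by apply/eval_setF; exists b; rewrite upd_same hj.
    by apply/(IHx i j o b).
  + case=> j [hj /eval_orF [o [_ [/eval_setF [b [ho hb]] hev]]]].
    rewrite upd_same in hb.
    exists (pos w j + o); split; first exact: valid_lt hb ho.
    by apply/(IHx _ j o b).
- have IHx : forall i j o b, onth w j = Some b -> o < size (g b) -> i = pos w j + o ->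
    (eval (Fw w) (update nu' x i) p <-> eval w (update nu x j) (T p (update off x o))).
    move=> i j o b hj ho ->; apply: IH.
    + move=> v hv; rewrite /update; case e: (var_eqb v x); first by exists b.
      by apply: H; rewrite /= e hv.
    + by move=> v; rewrite /update; case: (var_eqb v x).
  split.
  + move=> hall j hj; apply/eval_andF => o _ /=.
    case e: (onth w j) => [b|]; last first.
      by left; case/eval_setF=> b [_]; rewrite upd_same e.
    case: (ltnP o (size (g b))) => ho; last first.
      left; case/eval_setF=> b' [hb']; rewrite upd_same e => -[eb]; subst b'; by rewrite ltnNge ho in hb'.
    right; apply/(IHx (pos w j + o) j o b) => //.
    by apply: hall; exact: valid_lt e ho.
  + move=> hall i hi.
    have [j [o [b [hj ho ei]]]] := decomp hi.
    have := hall j (onth_some_lt hj) => /eval_andF /(_ o).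
    rewrite mem_iota add0n /= (leq_trans ho (size_le_M b)) => /(_ isT) [] /=.
      by case; apply/eval_setF; exists b; rewrite upd_same hj.
    by move/(IHx i j o b hj ho ei).
Qed.


Lemma qd_orF (I : Type) (h : I -> form B) s d :
  (forall i, qdepth (h i) <= d) -> qdepth (orF (map h s)) <= d.
Proof. by move=> H; elim: s => //= i s IH; rewrite geq_max H IH. Qed.

Lemma qd_andF (I : Type) (h : I -> form B) s d :
  (forall i, qdepth (h i) <= d) -> qdepth (andF (map h s)) <= d.
Proof. by move=> H; elim: s => //= i s IH; rewrite geq_max H IH. Qed.

Lemma qd_setF P x : qdepth (setF P x) = 0.
Proof. by apply/eqP; rewrite -leqn0; apply: qd_orF. Qed.

Lemma qd_invF P x y : qdepth (invF P x y) = 0.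
Proof. by apply/eqP; rewrite -leqn0; apply: qd_orF. Qed.

Lemma qd_boolF c : qdepth (boolF c) = 0.
Proof. by case: c. Qed.

Lemma T_depth phi off : qdepth (T phi off) <= qdepth phi.
Proof.
elim: phi off => [|a x|x y|x y|a x y|p IH|p IHp q IHq|p IHp q IHq|x p IH|x p IH] off /=;
  rewrite ?qd_setF ?qd_invF ?qd_boolF //.
- by rewrite geq_max !leq_max IHp IHq orbT.
- by rewrite geq_max !leq_max IHp IHq orbT.
- by apply: qd_orF => o /=; rewrite qd_setF max0n IH.
- by apply: qd_andF => o /=; rewrite qd_setF max0n IH.
Qed.

Lemma free_orF (I : Type) (h : I -> form B) s v :
  free v (orF (map h s)) -> exists i, free v (h i).
Proof. by elim: s => //= i s IH /orP [H|/IH]; [exists i|]. Qed.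

Lemma free_andF (I : Type) (h : I -> form B) s v :
  free v (andF (map h s)) -> exists i, free v (h i).
Proof. by elim: s => //= i s IH /orP [H|/IH]; [exists i|]. Qed.

Lemma free_setF P x v : free v (setF P x) -> var_eqb v x.
Proof. by case/free_orF. Qed.

Lemma free_invF P x y v : free v (invF P x y) -> var_eqb v x || var_eqb v y.
Proof. by case/free_orF. Qed.

Lemma free_boolF c v : free v (boolF c) = false.
Proof. by case: c. Qed.

Ltac splitor := repeat match goal with H : is_true (_ || _) |- _ => case/orP: H => H end.

Lemma T_free phi off v : free v (T phi off) -> free v phi.
Proof.
elim: phi off => [|a x|x y|x y|a x y|p IH|p IHp q IHq|p IHp q IHq|x p IH|x p IH] off /=;
  rewrite ?free_boolF ?orbF.
- by [].
- exact: free_setF.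
- by [].
- by move=> H; splitor; rewrite ?H ?orbT //; move/andP: H => [].
- move=> H; splitor; try (move/free_setF: H => H); try (move/free_invF: H => H);
   splitor; rewrite ?H ?orbT //.
- exact: IH.
- by case/orP=> [/IHp ->|/IHq ->]; rewrite ?orbT.
- by case/orP=> [/IHp ->|/IHq ->]; rewrite ?orbT.
- case/andP=> hx /free_orF [o /= /orP [/free_setF h|/IH ->]]; last by rewrite hx.
  by rewrite h in hx.
- case/andP=> hx /free_andF [o /= /orP [/free_setF h|/IH ->]]; last by rewrite hx.
  by rewrite h in hx.
Qed.

End Trans.

Lemma hom_Fw (A B : finType) (f : seq B -> seq A) : monoid_hom f ->
  forall w, f w = Fw (fun b => f [:: b]) w.
Proof.
case=> h0 hc; elim=> [|b w IH] //=.
by rewrite -cat1s hc IH.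
Qed.

Theorem lemma13 (k : nat) (A B : finType) (f : seq B -> seq A)
  (hf : monoid_hom f) (w1 w2 : seq B) :
  fo2inv_equiv k w1 w2 -> fo2inv_equiv k (f w1) (f w2).
Proof.
move=> H phi [hX hY] hd.
set g := fun b => f [:: b].
have key : forall w, sat (f w) phi <-> sat w (T g phi (fun _ => 0)).
  move=> w; rewrite /sat (hom_Fw hf); apply: T_correct.
  - by case; rewrite ?(negbTE hX) ?(negbTE hY).
  - by move=> v; rewrite pos0.
rewrite !key; apply: H.
- split; apply/negP => /T_free; [exact/negP|exact/negP].
- exact: leq_trans (T_depth _ _ _) hd.
Qed.
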